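(* There exists a polyhedral complex $\mathcal C$ of $\mathbb R^{n(n+1)/2}$ with support $\widetilde{K}$, such that the image by $\Phi$ of the set of matrices $A \in {\operatorname{\mathsf{TPD}}}_n(\mathbb{S}_{\max}^{\vee})$ such that all the eigenvalues of $A$ are simple and all the vectors $v^{(k)}$ are in $(\mathbb{S}_{\max}^{\vee}\setminus\{\mathbf{0}\})^n$ contains all the interiors of cells of maximal dimension of $\mathcal C$.
   Context: Here $\Gamma=\mathbb R$ and $\mathbb{S}_{\max}=\mathbb{S}_{\max}(\mathbb R)$ is the symmetrized tropical semiring, with zero $\mathbf{0}$, unit $\mathbf{1}$, minus $\ominus$, modulus $|\cdot|$ with values in $\mathbb{R}_{\max}=\mathbb R\cup\{-\infty\}$; $\mathbb{S}_{\max}^\vee$ is the set of signed elements. $A\in{\operatorname{\mathsf{TPD}}}_n(\mathbb{S}_{\max}^\vee)$: $A=(a_{ij})$ symmetric with signed entries, $\mathbf{0}<a_{ii}$ and $a_{ij}^2<a_{ii}a_{jj}$ for $i\ne j$. $\Psi(A)=(a_{ij})_{1\le i\le j\le n}$, $\mu$ applies the modulus entrywise, $\Phi=\mu\circ\Psi$, $K=\Phi({\operatorname{\mathsf{TPD}}}_n(\mathbb{S}_{\max}^\vee))$, and $\widetilde K$ is the closure in $\mathbb R^{n(n+1)/2}$ of $K\cap\mathbb R^{n(n+1)/2}=\{x: 2x_{ij}<x_{ii}+x_{jj}\ \forall i<j\}$, a convex polyhedron of dimension $n(n+1)/2$. The $\mathbb{S}_{\max}$-eigenvalues of $A$ are its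 diagonal entries $\gamma_k=a_{kk}$; after reindexing so that $\gamma_1\succeq\cdots\succeq\gamma_n$, $v^{(k)}=(\gamma_k I\ominus A)^{\mathrm{adj}}_{:,k}$. A polyhedral complex is a collection of polyhedra (cells) any two of which intersect in a common face or not at all; its support is the union of its cells. *)

(* Defs.v *)
From HB Require Import structures.
From mathcomp Require Import all_boot all_order all_algebra all_fingroup.
From mathcomp Require Import reals.
Set Implicit Arguments. Unset Strict Implicit. Unset Printing Implicit Defensive.
Import Order.TTheory GRing.Theory Num.Theory.
Local Open Scope ring_scope.

Section Smax.
Variable R : realType.

(* sign tags: positive a, negative (ominus a), balanced a^bullet *)
Inductive stag := SPlus | SMinus | SBal.

Definition stag_eqb (s t : stag) : bool :=
  match s, t with
  | SPlus, SPlus | SMinus, SMinus | SBal, SBal => true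
  | _, _ => false end.

Definition stag_mul (s t : stag) : stag :=
  match s, t with
  | SBal, _ | _, SBal => SBal
  | SPlus, u | u, SPlus => u
  | SMinus, SMinus => SPlus end.

Definition stag_opp (s : stag) : stag :=
  match s with SPlus => SMinus | SMinus => SPlus | SBal => SBal end.

(* SZero = the zero 0 (modulus -oo); SElt s a has modulus a in R *)
Inductive Smax := SZero | SElt of stag & R.

(* modulus |.| with values in R_max = R u {-oo}; None stands for -oo *)
Definition smod (x : Smax) : option R :=
  match x with SZero => None | SElt _ a => Some a end.

Definition sone : Smax := SElt SPlus 0.

Definition sadd (x y : Smax) : Smax :=
  match x, y with
  | SZero, _ => y
  | _, SZero => x
  | SElt s a, SElt t b =>
      if a < b then y else if b < a then x
      else SElt (if stag_eqb s t then s else SBal) a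
  end.

Definition smul (x y : Smax) : Smax :=
  match x, y with
  | SZero, _ | _, SZero => SZero
  | SElt s a, SElt t b => SElt (stag_mul s t) (a + b)
  end.

Definition sopp (x : Smax) : Smax :=
  match x with SZero => SZero | SElt s a => SElt (stag_opp s) a end.

Definition ssigned (x : Smax) : Prop :=
  match x with SZero => True | SElt SBal _ => False | SElt _ _ => True end.

Definition ssigned_nz (x : Smax) : Prop :=
  match x with SZero => False | SElt SBal _ => False | SElt _ _ => True end.

Definition slt (a b : Smax) : Prop :=
  match sadd b (sopp a) with SElt SPlus _ => True | _ => False end.

Definition sle (a b : Smax) : Prop :=
  match sadd b (sopp a) with SElt SMinus _ => False | _ => True end.

Definition ssign_pow (k : nat) : Smax := if odd k then sopp sone else sone.

Definition sdet (m : nat) (M : 'M[Smax]_m) : Smax :=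
  \big[sadd/SZero]_(sigma : 'S_m)
     smul (ssign_pow (odd_perm sigma)) (\big[smul/sone]_(i < m) M i (sigma i)).

Definition sadj (m : nat) (M : 'M[Smax]_m) : 'M[Smax]_m :=
  \matrix_(i, j) smul (ssign_pow (i + j)) (sdet (row' j (col' i M))).

Definition sshift (m : nat) (g : Smax) (A : 'M[Smax]_m) : 'M[Smax]_m :=
  \matrix_(i, j) sadd (if i == j then g else SZero) (sopp (A i j)).

Definition TPD (n : nat) (A : 'M[Smax]_n) : Prop :=
  (forall i j, A i j = A j i) /\
  (forall i j, ssigned (A i j)) /\
  (forall i, slt SZero (A i i)) /\
  (forall i j, i != j -> slt (smul (A i j) (A i j)) (smul (A i i) (A j j))).

(* The S_max-eigenvalues of a TPD matrix are its diagonal entries;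
   "all eigenvalues simple" = the diagonal entries are pairwise distinct *)
Definition simple_eigs (n : nat) (A : 'M[Smax]_n) : Prop :=
  forall i j : 'I_n, A i i = A j j -> i = j.

(* After reindexing (simultaneous permutation sigma of rows/columns) so that
   gamma_1 >= ... >= gamma_n, v^(k) = column k of adj(gamma_k I (-) A);
   all v^(k) have all their entries in S_max^vee \ {0}. *)
Definition good_eigvecs (n : nat) (A : 'M[Smax]_n) : Prop :=
  forall sigma : 'S_n,
    (forall i j : 'I_n, (i <= j)%N -> sle (A (sigma j) (sigma j)) (A (sigma i) (sigma i))) ->
    let A' := \matrix_(i, j) A (sigma i) (sigma j) in
    forall k i : 'I_n, ssigned_nz (sadj (sshift (A' k k) A') i k).

Definition Idx (n : nat) := {p : 'I_n * 'I_n | (p.1 <= p.2)%N}.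
Definition pt (n : nat) := Idx n -> R.

(* Phi(A) = x (as an element of R^{n(n+1)/2}, all entries finite) *)
Definition Phi_eq (n : nat) (A : 'M[Smax]_n) (x : pt n) : Prop :=
  forall p : Idx n, smod (A (val p).1 (val p).2) = Some (x p).

Definition KR (n : nat) (x : pt n) : Prop := exists A, TPD A /\ Phi_eq A x.

Definition closure (n : nat) (S : pt n -> Prop) (x : pt n) : Prop :=
  forall e : R, 0 < e -> exists y, S y /\ forall p, `|y p - x p| < e.

Definition interior (n : nat) (S : pt n -> Prop) (x : pt n) : Prop :=
  exists2 e : R, 0 < e & forall y, (forall p, `|y p - x p| < e) -> S y.

Definition Ktilde (n : nat) : pt n -> Prop := closure (@KR n).

Definition dot (n : nat) (c x : pt n) : R := \sum_(p : Idx n) c p * x p.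

Definition polyset (n : nat) (H : seq (pt n * R)) (x : pt n) : Prop :=
  all (fun h => dot h.1 x <= h.2) H.

(* F is a face of P (the empty set and P itself included) *)
Definition is_face (n : nat) (F P : pt n -> Prop) : Prop :=
  exists (c : pt n) (d : R), (forall x, P x -> dot c x <= d) /\
    (forall x, F x <-> (P x /\ dot c x = d)).

Definition dim_ge (n : nat) (S : pt n -> Prop) (d : nat) : Prop :=
  exists (p0 : pt n) (v : 'I_d -> pt n),
    S p0 /\ (forall k, S (fun p => p0 p + v k p)) /\
    (forall c : 'I_d -> R, (forall p, \sum_(k < d) c k * v k p = 0) ->
       forall k, c k = 0).

Definition is_complex (n m : nat) (cells : 'I_m -> seq (pt n * R)) : Prop :=
  forall i j : 'I_m,
    is_face (fun x => polyset (cells i) x /\ polyset (cells j) x) (polyset (cells i)) /\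
    is_face (fun x => polyset (cells i) x /\ polyset (cells j) x) (polyset (cells j)).

Definition support_is (n m : nat) (cells : 'I_m -> seq (pt n * R))
    (S : pt n -> Prop) : Prop :=
  forall x, (exists i, polyset (cells i) x) <-> S x.

Definition max_dim_cell (n m : nat) (cells : 'I_m -> seq (pt n * R)) (i : 'I_m) : Prop :=
  forall (j : 'I_m) (d : nat), dim_ge (polyset (cells j)) d -> dim_ge (polyset (cells i)) d.

End Smax.

(* Main.v *)
Require Import Defs.
From HB Require Import structures.
From mathcomp Require Import all_boot all_order all_algebra all_fingroup.
From mathcomp Require Import reals.
From mathcomp Require Import ring lra.
Set Implicit Arguments. Unset Strict Implicit. Unset Printing Implicit Defensive.
Import Order.TTheory GRing.Theory Num.Theory.
Local Open Scope ring_scope.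
Section Part1.
Variable R : realType.

Definition tagb (b : bool) : stag := if b then SMinus else SPlus.

Lemma smul_tag (b1 b2 : bool) (a1 a2 : R) :
  @smul R (SElt (tagb b1) a1) (SElt (tagb b2) a2) = SElt (tagb (b1 (+) b2)) (a1 + a2).
Proof. by case: b1; case: b2. Qed.

Lemma big_smul_tag (I : Type) (r : seq I) (P : pred I) (bb : I -> bool) (g : I -> R) (G : I -> Smax R) :
  (forall i, P i -> G i = SElt (tagb (bb i)) (g i)) ->
  \big[@smul R/sone R]_(i <- r | P i) G i =
  SElt (tagb (odd (\sum_(i <- r | P i) (bb i : nat)))) (\sum_(i <- r | P i) g i).
Proof.
move=> HG.
apply: (big_ind3 (fun (a : Smax R) (b : nat) (c : R) => a = SElt (tagb (odd b)) c)) => //.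
- move=> x1 x2 x3 y1 y2 y3 -> ->; by rewrite smul_tag oddD.
- by move=> i Pi; rewrite HG //; case: (bb i).
Qed.

Definition low (a : R) (y : Smax R) : Prop :=
  match y with SZero => True | SElt _ b => b < a end.

Lemma sadd_low (a : R) (y1 y2 : Smax R) : low a y1 -> low a y2 -> low a (sadd y1 y2).
Proof.
case: y1 => [|s b] //=; case: y2 => [|t c] //= h1 h2.
by case: ifP => _ //; case: ifP.
Qed.

Lemma sadd_top_l (b : bool) (a : R) (y : Smax R) : low a y -> sadd (SElt (tagb b) a) y = SElt (tagb b) a.
Proof.
case: y => [|t c] //= h.
by rewrite ltNge (ltW h) /= h.
Qed.

Lemma sadd_top_r (b : bool) (a : R) (y : Smax R) : low a y -> sadd y (SElt (tagb b) a) = SElt (tagb b) a.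
Proof. by case: y => [|t c] //= h; rewrite h. Qed.

Lemma sadd_top_top (b : bool) (a : R) : sadd (SElt (tagb b) a) (SElt (tagb b) a) = SElt (tagb b) a.
Proof. by rewrite /= ltxx; case: b. Qed.

Lemma big_sadd_top (I : eqType) (r : seq I) (F : I -> Smax R) (b : bool) (a : R) :
  (forall i, i \in r -> F i = SElt (tagb b) a \/ low a (F i)) ->
  (exists2 i, i \in r & F i = SElt (tagb b) a) ->
  \big[@sadd R/SZero R]_(i <- r) F i = SElt (tagb b) a.
Proof.
suff: (forall i, i \in r -> F i = SElt (tagb b) a \/ low a (F i)) ->
  (\big[@sadd R/SZero R]_(i <- r) F i = SElt (tagb b) a \/ low a (\big[@sadd R/SZero R]_(i <- r) F i)) /\
  ((exists2 i, i \in r & F i = SElt (tagb b) a) -> \big[@sadd R/SZero R]_(i <- r) F i = SElt (tagb b) a).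
  by move=> H h1 h2; case: (H h1) => _; apply.
elim: r => [|x r IH] H.
  by rewrite big_nil; split; [right | case].
have H' : forall i, i \in r -> F i = SElt (tagb b) a \/ low a (F i).
  by move=> i ir; apply: H; rewrite inE ir orbT.
case: (IH H') => IH1 IH2; rewrite big_cons.
have Hx := H x (mem_head _ _).
split.
  case: Hx => [->|lx].
    by case: IH1 => [->|l]; left; [exact: sadd_top_top | exact: sadd_top_l].
  by case: IH1 => [->|l]; [left; exact: sadd_top_r | right; exact: sadd_low].
case=> i; rewrite inE => /orP [/eqP -> ->|ir Fi].
  by case: IH1 => [->|l]; [exact: sadd_top_top | exact: sadd_top_l].
rewrite IH2; last by exists i.
by case: Hx => [->|l]; [exact: sadd_top_top | exact: sadd_top_r].
Qed.

End Part1.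

Section Part2.
Variable R : realType.
Variable n : nat.

Lemma pairI_proof (u v : 'I_n) :
  let p := if (u <= v)%N then (u, v) else (v, u) in (p.1 <= p.2)%N.
Proof. by case: (leqP u v) => //= /ltnW. Qed.

Definition pairI (u v : 'I_n) : Idx n := exist (fun p : 'I_n * 'I_n => (p.1 <= p.2)%N) _ (pairI_proof u v).

Lemma pairI_val (p : Idx n) : pairI (val p).1 (val p).2 = p.
Proof. by apply: val_inj; case: p => [[u v] h] /=; rewrite h. Qed.

Lemma pairIC (u v : 'I_n) : pairI u v = pairI v u.
Proof.
apply: val_inj => /=; case: (leqP u v) => h1; case: (leqP v u) => h2 //.
  by have -> : u = v by apply: val_inj; apply/eqP; rewrite eqn_leq h1 h2.
by move: (ltn_trans h1 h2); rewrite ltnn.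
Qed.

Lemma pairI_valE (u v : 'I_n) : (u <= v)%N -> val (pairI u v) = (u, v).
Proof. by move=> h /=; rewrite h. Qed.

Lemma pairI_eq (u v u' v' : 'I_n) : pairI u v = pairI u' v' ->
  (u = u' /\ v = v') \/ (u = v' /\ v = u').
Proof.
move/(congr1 val) => /=.
case: (leqP u v) => _; case: (leqP u' v') => _ [-> ->]; tauto.
Qed.

Definition isdiag (p : Idx n) : bool := (val p).1 == (val p).2.

Lemma isdiag_pairI (u v : 'I_n) : isdiag (pairI u v) = (u == v).
Proof. by rewrite /isdiag /=; case: leqP => _ //=; rewrite eq_sym. Qed.

Definition d1 (p : Idx n) := pairI (val p).1 (val p).1.
Definition d2 (p : Idx n) := pairI (val p).2 (val p).2.

Lemma diag_d1 p : isdiag p -> d1 p = p.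
Proof.
rewrite /isdiag /d1 => /eqP h; by rewrite -[in RHS](pairI_val p) -h.
Qed.
Lemma diag_d2 p : isdiag p -> d2 p = p.
Proof.
rewrite /isdiag /d2 => /eqP h; by rewrite -[in RHS](pairI_val p) h.
Qed.

Lemma isdiag_d1 p : isdiag (d1 p). Proof. by rewrite isdiag_pairI. Qed.
Lemma isdiag_d2 p : isdiag (d2 p). Proof. by rewrite isdiag_pairI. Qed.

Lemma d1_neq p : ~~ isdiag p -> d1 p != p.
Proof. by move=> h; apply: contra h => /eqP <-; rewrite isdiag_d1. Qed.
Lemma d2_neq p : ~~ isdiag p -> d2 p != p.
Proof. by move=> h; apply: contra h => /eqP <-; rewrite isdiag_d2. Qed.

Lemma d12_pairI (x : pt R n) (u v : 'I_n) :
  x (d1 (pairI u v)) + x (d2 (pairI u v)) = x (pairI u u) + x (pairI v v).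
Proof. by rewrite /d1 /d2 /=; case: leqP => _ //=; rewrite addrC. Qed.

Definition Kw (x : pt R n) := forall p, 2 * x p <= x (d1 p) + x (d2 p).
Definition Ks (x : pt R n) := forall p, ~~ isdiag p -> 2 * x p < x (d1 p) + x (d2 p).

Definition Amat (x : pt R n) : 'M[Smax R]_n := \matrix_(i, j) SElt SPlus (x (pairI i j)).

Lemma slt_sq (t : stag) (a b c : R) : ssigned (SElt t a) ->
  slt (smul (SElt t a) (SElt t a)) (smul (SElt SPlus b) (SElt SPlus c)) -> 2 * a < b + c.
Proof.
rewrite mulr2n mulrDl mul1r.
case: t => //= _; rewrite /slt /=; case: (ltgtP (b + c) (a + a)) => //.
Qed.

Lemma slt_sq' (a b c : R) : 2 * a < b + c ->
  slt (smul (SElt SPlus a) (SElt SPlus a)) (smul (SElt SPlus b) (SElt SPlus c)).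
Proof.
rewrite mulr2n mulrDl mul1r => h.
by rewrite /slt /=; case: (ltgtP (b + c) (a + a)) h => // h1 h2; move: (lt_trans h1 h2); rewrite ltxx.
Qed.

Lemma KR_Ks x : KR x -> Ks x.
Proof.
case=> A [[Asym [Asg [Apos Aoff]]] Ph] p ndp.
have Hp := Ph p; have H1 := Ph (d1 p); have H2 := Ph (d2 p).
have e1 : val (d1 p) = ((val p).1, (val p).1) by rewrite pairI_valE.
have e2 : val (d2 p) = ((val p).2, (val p).2) by rewrite pairI_valE.
rewrite e1 e2 /= in H1 H2.
have neq : (val p).1 != (val p).2 by [].
have := Aoff _ _ neq.
have := Asg (val p).1 (val p).2.
have := Apos (val p).1; have := Apos (val p).2.
move: Hp H1 H2.
case: (A (val p).1 (val p).2) => // t a [<-].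
case: (A (val p).1 (val p).1) => // s b [<-].
case: (A (val p).2 (val p).2) => // s' c [<-].
case: s => //; case: s' => //.
rewrite /slt /= => _ _ sg; exact: slt_sq.
Qed.

Lemma TPD_Amat x : Ks x -> TPD (Amat x).
Proof.
move=> hK; split; first by move=> i j; rewrite !mxE pairIC.
split; first by move=> i j; rewrite mxE.
split; first by move=> i; rewrite mxE.
move=> i j nij; rewrite !mxE; apply: slt_sq'.
rewrite -d12_pairI; apply: hK; by rewrite isdiag_pairI.
Qed.

Lemma Phi_Amat x : Phi_eq (Amat x) x.
Proof. by move=> p; rewrite mxE pairI_val. Qed.

Lemma Ks_KR x : Ks x -> KR x.
Proof. by move=> h; exists (Amat x); split; [exact: TPD_Amat | exact: Phi_Amat]. Qed.

Lemma Ktilde_Kw x : Ktilde x <-> Kw x.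
Proof.
split.
- move=> hc p; case dp: (isdiag p).
    by rewrite diag_d1 // diag_d2 // mulr2n mulrDl mul1r.
  rewrite leNgt; apply/negP => hlt.
  set del := 2 * x p - (x (d1 p) + x (d2 p)).
  have dpos : 0 < del by rewrite subr_gt0.
  have [y [ky hy]] := hc (del / 4) ltac:(rewrite divr_gt0 //).
  have := KR_Ks ky (negbT dp).
  have := hy p; have := hy (d1 p); have := hy (d2 p).
  rewrite !ltr_norml => /andP [a1 a2] /andP [b1 b2] /andP [c1 c2].
  rewrite /del in a1 a2 b1 b2 c1 c2 => h; lra.
- move=> hw e epos.
  exists (fun q => x q + (if isdiag q then e / 2 else 0)); split.
    apply: Ks_KR => p ndp /=; rewrite (negbTE ndp) !isdiag_d1 !isdiag_d2 addr0.
    have := hw p; lra.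
  move=> p /=; rewrite addrC addKr; case: ifP => _; last by rewrite normr0.
  by rewrite ger0_norm ?divr_ge0 ?ltW // ltr_pdivrMr // ltr_pMr // ltr1n.
Qed.

End Part2.

Section Part3.
Variable R : realType.
Variable n : nat.
Variable J : finType.
Variable G : J -> pt R n.

Lemma sum_ind (p : Idx n) (f : Idx n -> R) : \sum_(q : Idx n) (q == p)%:R * f q = f p.
Proof.
rewrite (bigD1 p) //= eqxx mul1r big1 ?addr0 // => q /negbTE ->; by rewrite mul0r.
Qed.

Definition kc (p : Idx n) : pt R n :=
  fun q => 2 * (q == p)%:R - ((q == d1 p)%:R + (q == d2 p)%:R).

Lemma dot_kc p (x : pt R n) : dot (kc p) x = 2 * x p - (x (d1 p) + x (d2 p)).
Proof.
rewrite /dot /kc.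
under eq_bigr do rewrite mulrBl.
rewrite sumrB; congr (_ - _).
  by rewrite -(sum_ind p) mulr_sumr; apply: eq_bigr => i _; rewrite mulrA.
by under eq_bigr do rewrite mulrDl; rewrite big_split /= !sum_ind.
Qed.

Definition sgv (b : bool) (l : pt R n) : pt R n := fun q => if b then l q else - l q.
Definition sv (b : bool) (l : pt R n) (x : pt R n) : R := if b then dot l x else - dot l x.

Lemma dot_sgv b l x : dot (sgv b l) x = sv b l x.
Proof.
rewrite /dot /sgv /sv; case: b => //.
by rewrite -sumrN; apply: eq_bigr => q _; rewrite mulNr.
Qed.

Definition IdxT := {p : 'I_n * 'I_n | (p.1 <= p.2)%N}.

Definition cellH (b : {ffun J -> bool}) : seq (pt R n * R) :=
  [seq (kc p, 0) | p <- index_enum (Idx n)] ++ [seq (sgv (b j) (G j), 0) | j <- enum J].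

Definition cellP (b : {ffun J -> bool}) (x : pt R n) : Prop :=
  Kw x /\ forall j, sv (b j) (G j) x <= 0.

Lemma polyset_cell b x : polyset (cellH b) x <-> cellP b x.
Proof.
rewrite /polyset /cellH all_cat !all_map; split.
- move=> /andP [h1 h2]; split.
    move=> p; have := allP h1 p (mem_index_enum p); rewrite /= dot_kc subr_le0 //.
  move=> j; have := allP h2 j (mem_index_enum j); by rewrite /= dot_sgv.
- case=> h1 h2; apply/andP; split; apply/allP => z _ /=.
    by rewrite dot_kc subr_le0; apply: h1.
  by rewrite dot_sgv.
Qed.

Lemma face_cell (b b' : {ffun J -> bool}) :
  is_face (fun x => polyset (cellH b) x /\ polyset (cellH b') x) (polyset (cellH b)).
Proof.
exists (fun q => \sum_(j | b j != b' j) sgv (b j) (G j) q), 0.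
have dotc : forall x, dot (fun q => \sum_(j | b j != b' j) sgv (b j) (G j) q) x =
   \sum_(j | b j != b' j) sv (b j) (G j) x.
  move=> x; rewrite /dot; under eq_bigr do rewrite mulr_suml.
  by rewrite exchange_big /=; apply: eq_bigr => j _; rewrite -dot_sgv.
split.
  by move=> x /polyset_cell [_ h]; rewrite dotc; apply: sumr_le0 => j _.
move=> x; rewrite dotc !polyset_cell; split.
- case=> [[hk h] [_ h']]; split => //; apply: big1 => j nj.
  have := h j; have := h' j; move: nj; rewrite /sv.
  by case: (b j); case: (b' j) => // _ a1 a2; lra.
- case=> [[hk h] hs]; split => //; split => // j.
  case e: (b j == b' j); first by move/eqP: e => <-.
  have := psumr_eq0P (P := fun j => b j != b' j) (F := fun j => - sv (b j) (G j) x).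
  rewrite sumrN hs oppr0 => /(_ _ erefl j) H.
  have : sv (b j) (G j) x = 0.
    by apply/eqP; rewrite -oppr_eq0; apply/eqP; apply: H; [move=> i _; rewrite oppr_ge0; apply: h | rewrite e].
  by move: e; rewrite /sv; case: (b j); case: (b' j) => // _ h0; lra.
Qed.

Definition ncell := #|{ffun J -> bool}|.
Definition cells (i : 'I_ncell) : seq (pt R n * R) := cellH (enum_val i).

Lemma cells_complex : is_complex cells.
Proof.
move=> i j; split; first exact: face_cell.
have [c [d [h1 h2]]] := face_cell (enum_val j) (enum_val i).
exists c, d; split => // x; rewrite -h2; tauto.
Qed.

Lemma cells_support : support_is cells (@Ktilde R n).
Proof.
move=> x; rewrite Ktilde_Kw; split.
  by case=> i /polyset_cell [].
move=> hw; exists (enum_rank [ffun j => dot (G j) x <= 0]).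
rewrite /cells enum_rankK; apply/polyset_cell; split => // j.
rewrite ffunE /sv; case: ifP => // /negbT; rewrite -ltNge oppr_le0; exact: ltW.
Qed.

Lemma dot_pert (l x : pt R n) (p : Idx n) (c : R) :
  dot l (fun q => x q + (if q == p then c else 0)) = dot l x + c * l p.
Proof.
rewrite /dot; under eq_bigr do rewrite mulrDr; rewrite big_split /=; congr (_ + _).
rewrite (bigD1 p) //= eqxx big1 ?addr0; first by rewrite mulrC.
by move=> q /negbTE ->; rewrite mulr0.
Qed.

Lemma interior_cell b x : interior (polyset (cellH b)) x ->
  Ks x /\ forall j, (exists q, G j q != 0) -> dot (G j) x != 0.
Proof.
case=> e epos hin.
have hx : cellP b x by apply/polyset_cell; apply: hin => p; rewrite subrr normr0.
have pert : forall (p : Idx n) (c : R), `|c| < e ->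
    cellP b (fun q => x q + (if q == p then c else 0)).
  move=> p c hc; apply/polyset_cell; apply: hin => q; rewrite addrC addKr.
  by case: ifP => _; rewrite ?normr0.
have he2 : `|e / 2| < e by rewrite ger0_norm ?divr_ge0 ?ltW // ltr_pdivrMr // ltr_pMr // ltr1n.
have he2' : `|- (e / 2)| < e by rewrite normrN.
have e2pos : 0 < e / 2 by rewrite divr_gt0.
split.
- move=> p ndp; rewrite ltNge; apply/negP => hge.
  have [hk _] := pert p _ he2.
  have := hk p; rewrite /= eqxx (negbTE (d1_neq ndp)) (negbTE (d2_neq ndp)) !addr0.
  have := (hx.1 p); lra.
- move=> j [q hq]; apply/negP => /eqP h0.
  have [_ h1] := pert q _ he2; have [_ h2] := pert q _ he2'.
  have := h1 j; have := h2 j; rewrite /sv !dot_pert h0 !add0r.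
  case: (b j) => a1 a2.
  - have : e / 2 * G j q = 0 by apply/eqP; rewrite eq_le a2 /=; move: a1; rewrite mulNr oppr_le0.
    by move/eqP; rewrite mulf_eq0 (negbTE hq) orbF; move/eqP => h; move: e2pos; rewrite h ltxx.
  - have : e / 2 * G j q = 0 by apply/eqP; rewrite eq_le; move: a1 a2; rewrite mulNr opprK oppr_le0 => -> ->.
    by move/eqP; rewrite mulf_eq0 (negbTE hq) orbF; move/eqP => h; move: e2pos; rewrite h ltxx.
Qed.

End Part3.

Section Part4.
Variable R : realType.
Variable n : nat.

Definition Dt := ('S_n * 'I_n * 'S_n)%type.
Definition Jt := (('I_n * 'I_n) + (Dt * Dt))%type.

Definition cco (s : 'S_n) (k a b : 'I_n) : Idx n :=
  if a == b then (if (a < k)%N then pairI (s a) (s a) else pairI (s k) (s k))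
  else pairI (s a) (s b).

Definition cfN (s : 'S_n) (k : 'I_n) (t : 'S_n) (q : Idx n) : nat :=
  (\sum_(a | a != k) (cco s k a (t a) == q))%N.

Definition coefv (d : Dt) : pt R n := fun q => (cfN d.1.1 d.1.2 d.2 q)%:R.

Definition Gf (j : Jt) : pt R n :=
  match j with
  | inl (i1, i2) => fun q => (q == pairI i1 i1)%:R - (q == pairI i2 i2)%:R
  | inr (d, d') => fun q => coefv d q - coefv d' q
  end.

Definition Gen (x : pt R n) := forall j, (exists q, Gf j q != 0) -> dot (Gf j) x != 0.

Lemma dot_sub (l1 l2 x : pt R n) : dot (fun q => l1 q - l2 q) x = dot l1 x - dot l2 x.
Proof. by rewrite /dot -sumrB; apply: eq_bigr => q _; rewrite mulrBl. Qed.

Lemma dot_ev (p : Idx n) (x : pt R n) : dot (fun q => (q == p)%:R) x = x p.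
Proof. exact: sum_ind. Qed.

Lemma natr_sumE (I : finType) (P : pred I) (F : I -> nat) :
  ((\sum_(i | P i) F i)%N)%:R = \sum_(i | P i) (F i)%:R :> R.
Proof. by apply: (big_morph _ (@natrD R)). Qed.

Lemma dot_coefv s k t (x : pt R n) :
  dot (coefv (s, k, t)) x = \sum_(a | a != k) x (cco s k a (t a)).
Proof.
have E : forall q, coefv (s,k,t) q = \sum_(a | a != k) ((cco s k a (t a) == q) : nat)%:R.
  move=> q; rewrite /coefv /cfN /=.
  exact: natr_sumE.
rewrite /dot; under eq_bigr do rewrite E mulr_suml.
rewrite exchange_big /=; apply: eq_bigr => a _.
rewrite -(sum_ind (cco s k a (t a))); apply: eq_bigr => q _.
by rewrite eq_sym.
Qed.

Lemma gen_diag x (i j : 'I_n) : Gen x -> x (pairI i i) = x (pairI j j) -> i = j.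
Proof.
move=> hg e; apply/eqP; apply/negP => /negP nij.
suff : dot (Gf (inl (i, j))) x != 0 by rewrite /= dot_sub !dot_ev e subrr eqxx.
apply: hg.
exists (pairI i i); rewrite /= eqxx.
case: (pairI i i =P pairI j j) => [/pairI_eq h|_]; last by rewrite subr0 oner_eq0.
by exfalso; move: nij; case: h => [[-> _]|[-> _]]; rewrite eqxx.
Qed.

Lemma gen_coef x (s : 'S_n) (k : 'I_n) (t1 t2 : 'S_n) : Gen x ->
  \sum_(a | a != k) x (cco s k a (t1 a)) = \sum_(a | a != k) x (cco s k a (t2 a)) ->
  forall q, cfN s k t1 q = cfN s k t2 q.
Proof.
move=> hg e q; apply/eqP; apply/negP => /negP nq.
suff : dot (Gf (inr ((s, k, t1), (s, k, t2)))) x != 0 by rewrite /= dot_sub !dot_coefv e subrr eqxx.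
apply: hg.
by exists q; rewrite /coefv /= subr_eq0 eqr_nat.
Qed.

End Part4.

Section Core.
Variable R : realType.
Variable n' : nat.
Local Notation n := n'.+1.
Variable x : pt R n.
Hypothesis hK : Ks x.
Hypothesis hG : Gen x.
Variable s : 'S_n.
Hypothesis hsort : forall a b : 'I_n, (a <= b)%N -> x (pairI (s b) (s b)) <= x (pairI (s a) (s a)).
Variables k i : 'I_n.

Definition Ap : 'M[Smax R]_n := \matrix_(i0, j0) (Amat x) (s i0) (s j0).
Definition Mf := sshift (Ap k k) Ap.

Definition xd (a : 'I_n) := x (pairI (s a) (s a)).
Definition mu (a b : 'I_n) := x (cco s k a b).
Definition ebit (a b : 'I_n) : bool := ~~ ((a == b) && (k < a)%N).

Lemma xd_lt (a b : 'I_n) : (a < b)%N -> xd b < xd a.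
Proof.
move=> hab; have hle := hsort (ltnW hab).
rewrite /xd lt_neqAle hle andbT; apply/eqP => e.
have eab := perm_inj (gen_diag hG e).
by move: hab; rewrite eab ltnn.
Qed.

Lemma entryE (a b : 'I_n) : a != k -> Mf a b = SElt (tagb (ebit a b)) (mu a b).
Proof.
move=> ak; rewrite /Mf /sshift /Ap !mxE.
case: (eqVneq a b) => [<-|nab].
- rewrite /ebit /mu /cco eqxx /=; case: (ltnP a k) => hak.
  + have h := xd_lt hak; rewrite /xd in h; rewrite h.
    by rewrite ltnNge (ltnW hak).
  + have hka : (k < a)%N by rewrite ltn_neqAle hak andbT eq_sym.
    have h := xd_lt hka; rewrite /xd in h.
    by rewrite ltNge (ltW h) /= h hka.
- by rewrite /ebit /mu /cco (negbTE nab) /=.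
Qed.

Definition minor := row' k (col' i Mf).

Lemma minorE (r c : 'I_n') : minor r c = SElt (tagb (ebit (lift k r) (lift i c))) (mu (lift k r) (lift i c)).
Proof. rewrite /minor mxE mxE entryE //; apply/eqP => h; by move: (neq_lift k r); rewrite h eqxx. Qed.

Definition T (sg : 'S_n') := \sum_(r < n') mu (lift k r) (lift i (sg r)).
Definition beta (sg : 'S_n') := (odd_perm sg) (+) odd (\sum_(r < n') ebit (lift k r) (lift i (sg r)))%N.

Lemma ssign_powE (b : bool) : ssign_pow R b = SElt (tagb b) 0.
Proof. by case: b. Qed.

Lemma termE (sg : 'S_n') :
  smul (ssign_pow R (odd_perm sg)) (\big[@smul R/sone R]_(r < n') minor r (sg r)) =
  SElt (tagb (beta sg)) (T sg).
Proof.
have E := @big_smul_tag R 'I_n' (index_enum 'I_n') xpredT (fun r => ebit (lift k r) (lift i (sg r)))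
   (fun r => mu (lift k r) (lift i (sg r))) (fun r => minor r (sg r)) (fun r _ => minorE r (sg r)).
rewrite E.
by rewrite ssign_powE smul_tag add0r.
Qed.


Lemma sum_liftR (h : 'I_n -> R) : \sum_(a | a != k) h a = \sum_(r < n') h (lift k r).
Proof.
rewrite big_mkcond (bigD1_ord k) //= eqxx add0r.
by apply: eq_bigr => r _; rewrite eq_sym neq_lift.
Qed.

Lemma sum_liftN (h : 'I_n -> nat) : (\sum_(a | a != k) h a = \sum_(r < n') h (lift k r))%N.
Proof.
rewrite big_mkcond (bigD1_ord k) //= eqxx add0n.
by apply: eq_bigr => r _; rewrite eq_sym neq_lift.
Qed.

Definition W (t : 'S_n) := \sum_(a | a != k) mu a (t a).

Lemma T_W (sg : 'S_n') : T sg = W (lift_perm k i sg).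
Proof.
by rewrite /W sum_liftR /T; apply: eq_bigr => r _; rewrite lift_perm_lift.
Qed.

Lemma lift_perm_surj (t : 'S_n) : t k = i -> exists sg : 'S_n', lift_perm k i sg = t.
Proof.
move=> tk.
pose f (r : 'I_n') := odflt r (unlift i (t (lift k r))).
have fK : forall r, lift i (f r) = t (lift k r).
  move=> r; rewrite /f; have : i != t (lift k r).
    by rewrite -tk (inj_eq perm_inj) neq_lift.
  by case/unlift_some => r' -> ->.
have finj : injective f.
  move=> r1 r2 e; have := congr1 (lift i) e; rewrite !fK => /perm_inj; exact: lift_inj.
exists (perm finj); apply/permP => a.
case: (unliftP k a) => [r ->|->]; last by rewrite lift_perm_id tk.
by rewrite lift_perm_lift permE fK.
Qed.

Lemma porbit_fix (t : 'S_n) b : t b = b -> porbit t b = [set b].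
Proof.
move=> tb; apply/setP => y; rewrite inE; apply/porbitP/eqP => [[m ->]|->].
  by rewrite permX iter_fix.
by exists 0%N; rewrite expg0 perm1.
Qed.

Lemma porbit_mem_perm (t : 'S_n) a b : (t b \in porbit t a) = (b \in porbit t a).
Proof.
rewrite -!eq_porbit_mem.
have -> : porbit t (t b) = porbit t b by have := porbit_perm t 1 b; rewrite expg1.
done.
Qed.

Lemma mu_diag_ge b : b != k -> xd b <= mu b b.
Proof.
move=> bk; rewrite /mu /cco eqxx; case: ltnP => h //.
exact: hsort.
Qed.

Lemma mu_off b c : b != c -> 2 * mu b c < xd b + xd c.
Proof.
move=> bc; rewrite /mu /cco (negbTE bc) /xd -d12_pairI; apply: hK.
by rewrite isdiag_pairI (inj_eq perm_inj).
Qed.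

Lemma path_form (sg : 'S_n') : (forall sg', T sg' <= T sg) ->
  forall a, lift_perm k i sg a != a -> a \in porbit (lift_perm k i sg) k.
Proof.
move=> hmax a; set t := lift_perm k i sg => ta.
apply/negP => /negP ak.
set C := porbit t a.
have kC : k \notin C by rewrite /C porbit_sym.
have memC : forall b, (t b \in C) = (b \in C) by move=> b; apply: porbit_mem_perm.
have Ck : forall b, b \in C -> b != k.
  by move=> b bC; apply/negP => /eqP bk; move: kC; rewrite -bk bC.
pose f b := if b \in C then b else t b.
have finj : injective f.
  move=> b1 b2; rewrite /f; case: ifP => h1; case: ifP => h2 //.
  - by move=> e; move: h1; rewrite e memC h2.
  - by move=> e; move: h2; rewrite -e memC h1.
  - exact: perm_inj.
pose t' := perm finj.
have t'k : t' k = i by rewrite permE /f (negbTE kC) lift_perm_id.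
have [sg' e'] := lift_perm_surj t'k.
have := hmax sg'; rewrite !T_W e' -/t.
have Wt' : W t' = W t + \sum_(b in C) (mu b b - mu b (t b)).
  rewrite /W.
  have -> : \sum_(b in C) (mu b b - mu b (t b)) =
      \sum_(b | b != k) (if b \in C then mu b b - mu b (t b) else 0).
    rewrite -big_mkcondr; apply: eq_bigl => b.
    case bC: (b \in C); last by rewrite andbF.
    by rewrite andbT (Ck _ bC).
  rewrite -big_split /=; apply: eq_bigr => b _; rewrite permE /f.
  by case: ifP => _; [rewrite addrC subrK | rewrite addr0].
have pos : 0 < \sum_(b in C) (mu b b - mu b (t b)).
  have H0 : \sum_(b in C) (xd b - xd (t b)) / 2 = 0.
    rewrite -mulr_suml sumrB.
    have -> : \sum_(b in C) xd (t b) = \sum_(b in C) xd b.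
      rewrite [RHS](reindex_inj (@perm_inj _ t)) /=; apply: eq_bigl => b; by rewrite memC.
    by rewrite subrr mul0r.
  rewrite -[X in X < _]H0; apply: ltr_sum.
    by apply/hasP; exists a; [exact: mem_index_enum | exact: porbit_id].
  move=> b bC.
  have tb : b != t b.
    apply/eqP => tbb.
    have : a \in porbit t b by rewrite porbit_sym.
    rewrite porbit_fix; last by rewrite -tbb.
    by rewrite inE => /eqP ab; move: ta; rewrite ab -tbb eqxx.
  have h1 := mu_diag_ge (Ck _ bC); have h2 := mu_off tb.
  lra.
rewrite Wt'; lra.
Qed.

Definition Fset (t : 'S_n) := [set a | (a != k) && (t a == a)].

Lemma card_porbits (t : 'S_n) : (forall a, t a != a -> a \in porbit t k) ->
  #|porbits t| = (#|Fset t|).+1.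
Proof.
move=> hp.
have E : porbits t = porbit t k |: [set [set a] | a in Fset t].
  apply/setP => X; rewrite in_setU1; apply/imsetP/idP.
  - case=> b _ ->; case: (boolP (b \in porbit t k)) => bk.
      by apply/orP; left; rewrite eq_porbit_mem.
    have tb : t b == b := contraR (hp b) bk.
    have bk' : b != k by apply: contraNneq bk => ->; exact: porbit_id.
    apply/orP; right; apply/imsetP; exists b; first by rewrite inE bk' tb.
    by rewrite porbit_fix // (eqP tb).
  - case/orP => [/eqP ->|/imsetP [a aF ->]]; first by exists k.
    exists a => //; rewrite porbit_fix //; move: aF; rewrite inE => /andP [_ /eqP] //.
rewrite E cardsU1 card_imset; last exact: set1_inj.
have -> : porbit t k \notin [set [set a] | a in Fset t].
  apply/imsetP => [[a aF e]]; move: aF; rewrite inE => /andP [ak _].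
  by have := porbit_id t k; rewrite e inE => /eqP ka; rewrite ka eqxx in ak.
by rewrite add1n.
Qed.

Lemma card_Fset (t : 'S_n) : #|Fset t| = (\sum_(a | a != k) (t a == a))%N.
Proof.
rewrite -sum1_card big_mkcond [RHS]big_mkcond /=; apply: eq_bigr => a _.
by rewrite inE; case: (a != k); case: (t a == a).
Qed.

Lemma isdiag_cco a b : isdiag (cco s k a b) = (a == b).
Proof.
rewrite /cco; case: eqP => [->|/eqP ab]; first by case: ifP => _; rewrite isdiag_pairI eqxx.
by rewrite isdiag_pairI (inj_eq perm_inj) (negbTE ab).
Qed.

Lemma Fcount (t : 'S_n) :
  (\sum_(a | a != k) (t a == a) = \sum_(q : Idx n) isdiag q * cfN s k t q)%N.
Proof.
rewrite /cfN; under [RHS]eq_bigr do rewrite big_distrr.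
rewrite [RHS]exchange_big /=; apply: eq_bigr => a _.
rewrite (bigD1 (cco s k a (t a))) //= eqxx muln1 big1 ?addn0.
  by rewrite isdiag_cco eq_sym.
by move=> q /negbTE; rewrite eq_sym => ->; rewrite muln0.
Qed.

Lemma Pcount1 (t : 'S_n) a : a != k ->
  (ebit a (t a) + (cco s k a (t a) == pairI (s k) (s k)) = 1)%N.
Proof.
move=> ak; rewrite /ebit /cco; case: (eqVneq a (t a)) => [e|ne].
- rewrite /=; case: (ltnP a k) => h.
  + rewrite [(k < a)%N]ltnNge (ltnW h) /=.
    by case: eqP => // /pairI_eq [[e1 _]|[e1 _]]; move: ak; rewrite (perm_inj e1) eqxx.
  + have hka : (k < a)%N by rewrite ltn_neqAle h andbT eq_sym.
    by rewrite hka eqxx.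
- rewrite ?(negbTE ne) /=; case: eqP => // /pairI_eq [[e1 e2]|[e1 e2]].
  + by move: ne; rewrite (perm_inj e2) (perm_inj e1) eqxx.
  + by move: ne; rewrite (perm_inj e2) (perm_inj e1) eqxx.
Qed.

Lemma Pcount (t : 'S_n) :
  (\sum_(a | a != k) ebit a (t a) + cfN s k t (pairI (s k) (s k)) = \sum_(a | a != k) 1)%N.
Proof.
rewrite /cfN -big_split /=; apply: eq_bigr => a ak; exact: Pcount1.
Qed.

Lemma beta_form (sg : 'S_n') : (forall sg', T sg' <= T sg) ->
  beta sg = odd k (+) odd i (+) (odd n (+) odd (#|Fset (lift_perm k i sg)|).+1)
     (+) odd (\sum_(a | a != k) ebit a (lift_perm k i sg a))%N.
Proof.
move=> hmax; rewrite /beta sum_liftN.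
under [in RHS]eq_bigr do rewrite lift_perm_lift.
congr (_ (+) _).
have := odd_lift_perm k i sg.
rewrite /odd_perm card_ord (card_porbits (path_form hmax)) => ->.
rewrite /odd_perm card_ord.
by case: (odd k); case: (odd i); case: (odd n'); case: (odd #|_|).
Qed.

Lemma beta_eq (sg sg0 : 'S_n') : (forall sg', T sg' <= T sg0) -> T sg = T sg0 -> beta sg = beta sg0.
Proof.
move=> hmax e.
have hmax' : forall sg', T sg' <= T sg by move=> sg'; rewrite e.
rewrite (beta_form hmax) (beta_form hmax').
set t := lift_perm k i sg; set t0 := lift_perm k i sg0.
have eW : W t = W t0 by rewrite /t /t0 -!T_W.
have hc := gen_coef hG eW.
have eF : #|Fset t| = #|Fset t0| by rewrite !card_Fset !Fcount; apply: eq_bigr => q _; rewrite hc.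
have h0 := Pcount t; have h1 := Pcount t0; rewrite hc -h1 in h0.
have eB := addIn h0.
by rewrite eF eB.
Qed.

Lemma exmax (I : finType) (i0 : I) (F : I -> R) : exists i, forall j, F j <= F i.
Proof.
case: (@arg_maxP _ _ I i0 predT F) => // j _ H; exists j => j'; exact: H.
Qed.

Lemma det_signed : exists b v, sdet minor = SElt (tagb b) v.
Proof.
have [sg0 hmax] := exmax 1%g T.
exists (beta sg0), (T sg0).
rewrite /sdet; under eq_bigr do rewrite termE.
apply: big_sadd_top.
  move=> sg _; have := hmax sg; rewrite le_eqVlt => /orP [/eqP e|lt].
    by left; rewrite (beta_eq hmax e) e.
  by right.
by exists sg0 => //; exact: mem_index_enum.
Qed.

Lemma core_entry : ssigned_nz (sadj (sshift (Ap k k) Ap) i k).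
Proof.
rewrite /sadj mxE; have [b [v E]] := det_signed; rewrite /minor /Mf in E; rewrite E.
have -> : ssign_pow R (i + k) = SElt (tagb (odd (i + k))) 0 by rewrite /ssign_pow; case: odd.
by rewrite smul_tag; case: (_ (+) _).
Qed.

End Core.

Section Final.
Variable R : realType.

Lemma sle_pos (u v : R) : sle (SElt SPlus u) (SElt SPlus v) -> u <= v.
Proof.
move=> h; rewrite leNgt; apply/negP => vu; move: h; by rewrite /sle /= vu.
Qed.

Lemma good_Amat n (x : pt R n) : Ks x -> Gen x -> good_eigvecs (Amat x).
Proof.
case: n x => [|n'] x hK hG s hs /=; first by move=> k; case: k.
have hsort : forall a b : 'I_n'.+1, (a <= b)%N -> x (pairI (s b) (s b)) <= x (pairI (s a) (s a)).
  move=> a b ab; have := hs a b ab; rewrite !mxE; exact: sle_pos.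
move=> k i; exact: (core_entry hK hG hsort k i).
Qed.

Lemma simple_Amat n (x : pt R n) : Gen x -> simple_eigs (Amat x).
Proof. by move=> hG a b; rewrite !mxE => -[e]; apply: gen_diag hG e. Qed.

End Final.


Unset Implicit Arguments.

Theorem corollary5p24 (R : realType) (n : nat) :
  exists (m : nat) (cells : 'I_m -> seq (pt R n * R)),
    is_complex cells /\ support_is cells (@Ktilde R n) /\
    forall i : 'I_m, max_dim_cell cells i ->
      forall x : pt R n, interior (polyset (cells i)) x ->
        exists A : 'M[Smax R]_n,
          TPD A /\ simple_eigs A /\ good_eigvecs A /\ Phi_eq A x.
Proof.
exists (ncell (Jt n)), (cells (@Gf R n)).
split; first exact: cells_complex.
split; first exact: cells_support.
move=> i _ x hint.
have [hK hG] := interior_cell hint.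
exists (Amat x); split; first exact: TPD_Amat.
split; first exact: simple_Amat.
split; first exact: good_Amat.
exact: Phi_Amat.
Qed.
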